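(* Let $N\ge 8$ and let $\alpha=1/4$, $a=3/2$, $\hat a=a/2=3/4$, $\alpha_1=2$, $a_1=-5/2$, $b_1=2$, $c_1=1/2$. Define the $N\times N$ matrices $A$ and $B$ by the following rows (all unspecified entries are zero): - row $1$: $A_{11}=1$, $A_{12}=\alpha_1$; $B_{11}=a_1$, $B_{12}=b_1$, $B_{13}=c_1$; - row $N$: $A_{NN}=1$, $A_{N,N-1}=\alpha_1$; $B_{NN}=-a_1$, $B_{N,N-1}=-b_1$, $B_{N,N-2}=-c_1$; - rows $j=2,\ldots,N-1$: $A_{j,j-1}=A_{j,j+1}=\alpha$, $A_{jj}=1$; $B_{j,j-1}=-\hat a$, $B_{j,j+1}=\hat a$. (So $A\mathbf f'=B\mathbf f$ is the fourth-order Padé scheme $\alpha f'_{j-1}+f'_j+\alpha f'_{j+1}=\tfrac a2(f_{j+1}-f_{j-1})$ at interior points, closed by the third-order one-sided schemes $f'_1+\alpha_1f'_2=a_1f_1+b_1f_2+c_1f_3$ and $f'_N+\alpha_1f'_{N-1}=-(a_1f_N+b_1f_{N-1}+c_1f_{N-2})$, with unit grid spacing in the index variable.) Define $\widehat{\mathbf w}\in\mathbb R^N$ by $\widehat w_1=\widehat w_N=3/8$, $\widehat w_2=\widehat w_{N-1}=7/6$, $\widehat w_3=\widehat w_{N-2}=23/24$, and $\widehat w_j=1$ for $4\le j\le N-3$. Then: (i) the vector $\mathbf w$ with $w_1=w_N=3/8$, $w_2=w_{N-1}=3/4$, and $w_j=1$ for $3\le j\le N-2$ satisfies $\mathbf w^T\mathbf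 b_i=0$ for all $2\le i\le N-1$ (where $\mathbf b_i$ is the $i$-th column of $B$), $\mathbf w^T\mathbf b_1=-3/2$, $\mathbf w^T\mathbf b_N=3/2$, and $\widehat{\mathbf w}^T=-\mathbf w^TA/(\mathbf w^T\mathbf b_1)$; (ii) consequently, for any positive $h_1,\ldots,h_N$ and any functions $u(t),f(t)\in\mathbb R^N$ such that $\mathbf U=(h_1u_1,\ldots,h_Nu_N)^T$ satisfies $A\,d\mathbf U/dt+Bf=0$, one has $$\frac{d}{dt}\sum_{j=1}^N\widehat w_j\,h_j\,u_j=f_1-f_N .$$
   Context: Here $h_i^{-1}=(d\xi/dx)_i$ is the grid metric factor for a mapped grid $x(\xi)$ with $\xi_i=i$, and the semi-discrete system $A\,d\mathbf U/dt+Bf=0$ is the Padé spatial discretization of $\partial_t u+\partial_x f=0$. The identity in (ii) is a discrete analogue of $\frac{d}{dt}\int_0^L u\,dx=f(0)-f(L)$. *)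

(* Defs.v *)
From HB Require Import structures.
From mathcomp Require Import all_boot all_order all_algebra.
From mathcomp Require Import all_classical all_reals all_analysis.
Set Implicit Arguments. Unset Strict Implicit. Unset Printing Implicit Defensive.
Import Order.TTheory GRing.Theory Num.Theory.
Local Open Scope ring_scope.

(* Indices are 0-based: paper index j (1..N) corresponds to nat j-1 (0..N-1). *)
Section Pade.
Variable R : realType.

Definition alpha : R := 1 / 4.
Definition a_int : R := 3 / 2.
Definition ahat : R := a_int / 2.
Definition alpha1 : R := 2.
Definition a1 : R := - (5 / 2).
Definition b1 : R := 2.
Definition c1 : R := 1 / 2.

Definition padeA_e (N i j : nat) : R :=
  if i == 0%N then (if j == 0%N then 1 else if j == 1%N then alpha1 else 0)
  else if i == N.-1 then
    (if j == N.-1 then 1 else if j == N.-2 then alpha1 else 0)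
  else if j == i then 1
  else if (j.+1 == i) || (j == i.+1) then alpha else 0.

Definition padeB_e (N i j : nat) : R :=
  if i == 0%N then
    (if j == 0%N then a1 else if j == 1%N then b1 else if j == 2%N then c1 else 0)
  else if i == N.-1 then
    (if j == N.-1 then - a1 else if j == N.-2 then - b1
     else if j == (N - 3)%N then - c1 else 0)
  else if j.+1 == i then - ahat
  else if j == i.+1 then ahat else 0.

Definition padeA (N : nat) : 'M[R]_N := \matrix_(i < N, j < N) padeA_e N i j.
Definition padeB (N : nat) : 'M[R]_N := \matrix_(i < N, j < N) padeB_e N i j.

Definition w_e (N j : nat) : R :=
  if (j == 0%N) || (j == N.-1) then 3 / 8
  else if (j == 1%N) || (j == N.-2) then 3 / 4
  else 1.

Definition what_e (N j : nat) : R :=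
  if (j == 0%N) || (j == N.-1) then 3 / 8
  else if (j == 1%N) || (j == N.-2) then 7 / 6
  else if (j == 2%N) || (j == (N - 3)%N) then 23 / 24
  else 1.

Definition wrow (N : nat) : 'rV[R]_N := \row_(j < N) w_e N j.
Definition whatrow (N : nat) : 'rV[R]_N := \row_(j < N) what_e N j.

End Pade.

(* Main.v *)
Require Import Defs.
From HB Require Import structures.
From mathcomp Require Import all_boot all_order all_algebra.
From mathcomp Require Import all_classical all_reals all_analysis.
From mathcomp Require Import zify ring lra.
Import Order.TTheory GRing.Theory Num.Theory.
Local Open Scope ring_scope.

Section S.
Variable R : realType.

Lemma sum_support (N : nat) (G : nat -> R) (S : seq nat) :
  uniq S -> all (fun i => (i < N)%N) S ->
  (forall i, (i < N)%N -> (i \in S) = false -> G i = 0) ->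
  \sum_(i < N) G i = \sum_(i <- S) G i.
Proof.
move=> uS aS Z.
rewrite -(big_mkord xpredT) (bigID (mem S)) /=.
rewrite [X in _ + X]big1_seq ?addr0; last first.
  move=> i /andP[Hi]; rewrite mem_index_iota => /andP[_ HiN].
  by apply: Z => //; apply/negbTE.
rewrite -big_filter; apply: perm_big; apply: uniq_perm => //.
  by rewrite filter_uniq // iota_uniq.
move=> x; rewrite mem_filter mem_index_iota /=.
case xS: (x \in S) => //=.
by move/allP: aS => /(_ x xS) ->.
Qed.


Lemma Bnz N i j : padeB_e R N i j != 0 ->
  [|| (i == 0%N) && (j <= 2)%N, (i == N.-1) && (N - 3 <= j)%N, j.+1 == i | j == i.+1].
Proof.
rewrite /padeB_e; repeat (case: ifP => ?); move=> H; try (by rewrite eqxx in H); lia.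
Qed.

Lemma Anz N i j : padeA_e R N i j != 0 ->
  [|| (i == 0%N) && (j <= 1)%N, (i == N.-1) && (N.-2 <= j)%N, j == i, j.+1 == i | j == i.+1].
Proof.
rewrite /padeA_e; repeat (case: ifP => ?); move=> H; try (by rewrite eqxx in H); lia.
Qed.

Ltac decif := match goal with |- context [if ?b then _ else _] =>
  first [ rewrite (_ : b = true); last by lia
        | rewrite (_ : b = false); last by lia ] end.

Ltac evalt := rewrite /w_e /padeB_e /padeA_e /what_e;
  repeat decif; rewrite ?mulr0 ?addr0; rewrite ?/alpha ?/ahat ?/a_int ?/alpha1 ?/a1 ?/b1 ?/c1; lra.

Ltac solve_col G S NZ := rewrite (@sum_support _ G S);
  [ rewrite !big_cons big_nil; evalt
  | rewrite /= ?inE; (done || lia)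
  | rewrite /=; (done || lia)
  | let i := fresh "i" in let Hi := fresh in let Hs := fresh in let H := fresh in
    move=> i Hi Hs; rewrite !inE in Hs;
    match goal with |- _ * ?e = 0 => case: (eqVneq e 0) => [->|/NZ H]; [by rewrite mulr0 | exfalso; lia] end ].

Lemma colB N j : (8 <= N)%N -> (j < N)%N ->
  \sum_(i < N) w_e R N i * padeB_e R N i j =
  if j == 0%N then -(3/2) else if j == N.-1 then 3/2 else 0.
Proof.
move=> HN Hj.
have : (j = 0 \/ j = 1 \/ j = 2 \/ (3 <= j <= N - 4) \/ j = (N-3) \/ j = (N-2) \/ j = (N-1))%N by lia.
case=> [Hj'|[Hj'|[Hj'|[Hj'|[Hj'|[Hj'|Hj']]]]]].
- solve_col (fun k => w_e R N k * padeB_e R N k j) [:: 0%N; 1%N] Bnz.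
- solve_col (fun k => w_e R N k * padeB_e R N k j) [:: 0%N; 2%N] Bnz.
- solve_col (fun k => w_e R N k * padeB_e R N k j) [:: 0%N; 1%N; 3%N] Bnz.
- solve_col (fun k => w_e R N k * padeB_e R N k j) [:: j.-1; j.+1] Bnz.
- solve_col (fun k => w_e R N k * padeB_e R N k j) [:: (N-4)%N; (N-2)%N; (N-1)%N] Bnz.
- solve_col (fun k => w_e R N k * padeB_e R N k j) [:: (N-3)%N; (N-1)%N] Bnz.
- solve_col (fun k => w_e R N k * padeB_e R N k j) [:: (N-2)%N; (N-1)%N] Bnz.
Qed.

Lemma colA N j : (8 <= N)%N -> (j < N)%N ->
  \sum_(i < N) w_e R N i * padeA_e R N i j = 3/2 * what_e R N j.
Proof.
move=> HN Hj.
have : (j = 0 \/ j = 1 \/ j = 2 \/ (3 <= j <= N - 4) \/ j = (N-3) \/ j = (N-2) \/ j = (N-1))%N by lia.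
case=> [Hj'|[Hj'|[Hj'|[Hj'|[Hj'|[Hj'|Hj']]]]]].
- solve_col (fun k => w_e R N k * padeA_e R N k j) [:: 0%N; 1%N] Anz.
- solve_col (fun k => w_e R N k * padeA_e R N k j) [:: 0%N; 1%N; 2%N] Anz.
- solve_col (fun k => w_e R N k * padeA_e R N k j) [:: 1%N; 2%N; 3%N] Anz.
- solve_col (fun k => w_e R N k * padeA_e R N k j) [:: j.-1; j; j.+1] Anz.
- solve_col (fun k => w_e R N k * padeA_e R N k j) [:: (N-4)%N; (N-3)%N; (N-2)%N] Anz.
- solve_col (fun k => w_e R N k * padeA_e R N k j) [:: (N-3)%N; (N-2)%N; (N-1)%N] Anz.
- solve_col (fun k => w_e R N k * padeA_e R N k j) [:: (N-2)%N; (N-1)%N] Anz.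
Qed.
End S.

Theorem mainTheorem2 (R : realType) (N : nat) (HN : (8 <= N)%N) :
  (* (i) *)
  ((forall i : 'I_N, (0 < val i < N.-1)%N ->
       (wrow R N *m padeB R N) 0 i = 0)
   /\ (forall i : 'I_N, val i = 0%N -> (wrow R N *m padeB R N) 0 i = - (3 / 2))
   /\ (forall i : 'I_N, val i = N.-1 -> (wrow R N *m padeB R N) 0 i = 3 / 2)
   /\ (forall i0 : 'I_N, val i0 = 0%N ->
         whatrow R N = - ((wrow R N *m padeB R N) 0 i0)^-1 *: (wrow R N *m padeA R N)))
  /\
  (* (ii) *)
  (forall (h : 'I_N -> R) (u f : 'I_N -> R -> R),
     (forall j, 0 < h j) ->
     (forall j t, derivable (u j) t 1) ->
     (forall t : R,
        padeA R N *m (\col_j (derive1 (fun s => h j * u j s) t))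
        + padeB R N *m (\col_j f j t) = 0) ->
     forall (t : R) (i0 iN : 'I_N), val i0 = 0%N -> val iN = N.-1 ->
       is_derive t 1 (fun s => \sum_(j < N) what_e R N j * h j * u j s)
                 (f i0 t - f iN t)).
Proof.
have EB : forall j : 'I_N, (wrow R N *m padeB R N) 0 j =
   if val j == 0%N then -(3/2) else if val j == N.-1 then 3/2 else 0.
  move=> j; rewrite !mxE; under eq_bigr do rewrite !mxE; exact: colB.
have EA : forall j : 'I_N, (wrow R N *m padeA R N) 0 j = 3/2 * what_e R N j.
  move=> j; rewrite !mxE; under eq_bigr do rewrite !mxE; exact: colA.
have Wi : forall i0 : 'I_N, val i0 = 0%N ->
         whatrow R N = - ((wrow R N *m padeB R N) 0 i0)^-1 *: (wrow R N *m padeA R N).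
  move=> i0 H0; apply/rowP => j; rewrite (EB i0) H0 eqxx [RHS]mxE EA [LHS]mxE.
  rewrite invrN opprK.
  have -> : (3 / 2 : R)^-1 = 2/3 by rewrite invf_div.
  lra.
split.
  split.
    move=> i Hi; rewrite EB; case: eqP => [?|_]; first lia.
    by case: eqP => [?|_]; first lia.
  split.
    by move=> i Hi; rewrite EB Hi eqxx.
  split; last exact: Wi.
  move=> i Hi; rewrite EB Hi; case: eqP => [?|_]; first lia.
  by rewrite eqxx.
move=> h u f hpos hder hyp t i0 iN H0 HNN.
have Dj : forall j : 'I_N, is_derive t 1 (fun s => what_e R N j * h j * u j s)
   (what_e R N j * h j * 'D_1 (u j) t).
  move=> j; exact: (is_deriveZ (what_e R N j * h j) (derivableP (hder j t))).
have Dh : forall j : 'I_N, derive1 (fun s => h j * u j s) t = h j * 'D_1 (u j) t.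
  move=> j; rewrite derive1E.
  exact: (deriveZ (h j) (hder j t)).
have -> : (fun s => \sum_(j < N) what_e R N j * h j * u j s) =
          \sum_(j < N) (fun s => what_e R N j * h j * u j s).
  by apply/funext => s; rewrite fct_sumE.
apply: (is_derive_eq (is_derive_sum Dj)).
have := congr1 (fun M => (wrow R N *m M) 0 0) (hyp t).
rewrite /= mulmxDr !mulmxA mulmx0 mxE [X in _ + X]mxE !mxE.
move=> E.
rewrite (eq_bigr (fun j : 'I_N => 3/2 * (what_e R N j * h j * 'D_1 (u j) t))) in E; last first.
  by move=> j _; rewrite EA mxE Dh !mulrA.
rewrite [X in _ + X = _](eq_bigr (fun j : 'I_N => (if val j == 0%N then -(3/2) else if val j == N.-1 then 3/2 else 0) * f j t)) in E; last first.
  by move=> j _; rewrite EB mxE.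
have Hne : iN != i0 by apply/eqP => E'; move: HNN; rewrite E' H0; lia.
rewrite [X in _ + X = _](bigD1 i0) //= in E.
rewrite [X in _ + (_ + X) = _](bigD1 iN) //= in E.
rewrite [X in _ + (_ + (_ + X)) = _]big1 in E; last first.
  move=> j /andP[Hj1 Hj2]; case: eqP => [Hv|_].
    move: Hj1; have -> : j = i0 by apply: ord_inj; rewrite Hv; symmetry; exact: H0.
    by rewrite eqxx.
  case: eqP => [Hv|_]; last by rewrite mul0r.
  move: Hj2; have -> : j = iN by apply: ord_inj; rewrite Hv; symmetry; exact: HNN.
  by rewrite eqxx.
move: E; rewrite H0 HNN eqxx.
have -> : (N.-1 == 0%N) = false by apply/eqP; lia.
rewrite eqxx addr0 -mulr_sumr => E.
lra.
Qed.
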